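(* There exist natural numbers $B_0,B_1,\dots$ such that the following holds. Let $f$ be a conjunction of basic likelihood formulas and negations of basic likelihood formulas, let $p_1,\dots,p_N$ be the primitive propositions occurring in $f$, let $M_N=2^{2^N}$, and let $\rho_1,\dots,\rho_{M_N}$ be propositional formulas over $p_1,\dots,p_N$, one from each propositional-equivalence class, with $\rho_1\equiv\mathit{false}$ and $\rho_{M_N}\equiv\mathit{true}$. Let $\bar f$ be the system over real variables $x_1,\dots,x_{M_N}$ obtained from $f$ by replacing each conjunct $\theta_1l(\phi_1)+\cdots+\theta_rl(\phi_r)\ge\alpha$ by $\sum_{j}\theta_j x_{i(j)}\ge\alpha$ and each negated conjunct $\neg(\theta_1l(\phi_1)+\cdots+\theta_rl(\phi_r)\ge\alpha)$ by $\sum_j\theta_jx_{i(j)}<\alpha$, where $\rho_{i(j)}$ is the listed formula equivalent to $\phi_j$. Let $\hat f$ be the system consisting of $\bar f$ together with: $x_1=0$; $x_{M_N}=1$; $x_i\ge0$ for all $i$; and, for all natural numbers $m,n,k\le B_{2^N}$ and indices $i_1,\dots,i_m,i_{m+1}\in\{1,\dots,M_N\}$ such that both $\rho_{i_{m+1}}\Rightarrow\bigvee_{J\subseteq\{1,\dots,m\},|J|=k+n}\bigwedge_{j\in J}\rho_{i_j}$ and $\bigvee_{J\subseteq\{1,\dots,m\},|J|=k}\bigwedge_{j\in J}\rho_{i_j}$ are propositional tautologies, the inequality $x_{i_1}+\cdots+x_{i_m}-n\,x_{i_{m+1}}\ge k$. Then $f$ is satisfiable in some upper probability structure iff $\hat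 f$ has a real solution; moreover, if $\hat f$ has a solution then $f$ is satisfiable in an upper probability structure with at most $2^{|f|}$ worlds.
   Context: Fix a set $\Phi_0$ of primitive propositions; propositional formulas are built from $\Phi_0$ with $\wedge,\neg$ (plus the constant $\mathit{true}$, with $\mathit{false}=\neg\mathit{true}$). A term is $\theta_1 l(\phi_1)+\cdots+\theta_k l(\phi_k)$ with $k\ge1$, reals $\theta_i$ and propositional formulas $\phi_i$; a basic likelihood formula is $t\ge\alpha$ for a term $t$ and real $\alpha$; likelihood formulas are Boolean combinations (via $\neg,\wedge$) of basic likelihood formulas. $|f|$ is the number of symbols needed to write $f$, each coefficient counting as one symbol. An upper probability structure is $M=(\Omega,\Sigma,\mathcal{P},\pi)$ with $\Sigma$ an algebra on $\Omega$, $\mathcal{P}$ a set of finitely additive probability measures on $\Sigma$, and $\pi$ assigning to each $s\in\Omega$ a truth assignment to $\Phi_0$, such that $[\![p]\!]_M=\{s:\pi(s)(p)=\mathbf{true}\}\in\Sigma$ for each $p$; $[\![\phi]\!]_M$ is defined for all propositional $\phi$ in the standard way. With $\mathcal{P}^*(X)=\sup\{\mu(X):\mu\in\mathcal{P}\}$: $M\models\theta_1 l(\phi_1)+\cdots+\theta_k l(\phi_k)\ge\alpha$ iff $\sum_i\theta_i\mathcal{P}^*([\![\phi_i]\!]_M)\ge\alpha$; $M\models\neg f$ iff $M\not\models f$; $M\models f\wedge g$ iff both. $f$ is satisfiable if $M\models f$ for some upper probability structure $M$. *)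

(* Defs.v *)
From Stdlib Require Import Reals List Arith.
From Coquelicot Require Import Rbar Lub.
Import ListNotations.
Open Scope R_scope.

Inductive pformula : Type :=
| PTrue : pformula
| PVar : nat -> pformula
| PNot : pformula -> pformula
| PAnd : pformula -> pformula -> pformula.

Definition PFalse : pformula := PNot PTrue.

Fixpoint peval (v : nat -> bool) (phi : pformula) : bool :=
  match phi with
  | PTrue => true
  | PVar p => v p
  | PNot a => negb (peval v a)
  | PAnd a b => andb (peval v a) (peval v b)
  end.

Definition pequiv (a b : pformula) : Prop := forall v : nat -> bool, peval v a = peval v b.

Fixpoint pvars (phi : pformula) : list nat :=
  match phi with
  | PTrue => []
  | PVar p => [p]
  | PNot a => pvars a
  | PAnd a b => pvars a ++ pvars b
  end.

Fixpoint psize (phi : pformula) : nat :=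
  match phi with
  | PTrue => 1%nat
  | PVar _ => 1%nat
  | PNot a => S (psize a)
  | PAnd a b => (psize a + 1 + psize b)%nat
  end.

(* a term theta_1 l(phi_1) + ... + theta_k l(phi_k), k >= 1:
   the first summand together with the list of the remaining ones *)
Definition term : Type := ((R * pformula) * list (R * pformula))%type.

Definition term_summands (t : term) : list (R * pformula) := fst t :: snd t.

Inductive lformula : Type :=
| LBasic : term -> R -> lformula          (* t >= alpha *)
| LNot : lformula -> lformula
| LAnd : lformula -> lformula -> lformula.

(* |f|: each summand theta l(phi) is written with the symbols
   theta, l, (, phi, ) ; summands are separated by + ; then >= alpha. *)
Definition summand_size (s : R * pformula) : nat := (4 + psize (snd s))%nat.

Definition term_size (t : term) : nat :=
  (fold_right (fun s n => summand_size s + n) 0 (term_summands t)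
   + length (snd t))%nat.

Fixpoint lsize (f : lformula) : nat :=
  match f with
  | LBasic t _ => (term_size t + 2)%nat
  | LNot g => S (lsize g)
  | LAnd g h => (lsize g + 1 + lsize h)%nat
  end.

Fixpoint lprops (f : lformula) : list nat :=
  match f with
  | LBasic t _ => flat_map (fun s => pvars (snd s)) (term_summands t)
  | LNot g => lprops g
  | LAnd g h => lprops g ++ lprops h
  end.

Definition props_of (f : lformula) : list nat := nodup Nat.eq_dec (lprops f).

Record literal : Type := mkLit {
  lit_pos : bool;
  lit_term : term;
  lit_alpha : R }.

Definition lit_formula (l : literal) : lformula :=
  if lit_pos l then LBasic (lit_term l) (lit_alpha l)
  else LNot (LBasic (lit_term l) (lit_alpha l)).

Fixpoint conj_lits (l0 : literal) (ls : list literal) : lformula :=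
  match ls with
  | [] => lit_formula l0
  | l1 :: ls' => LAnd (lit_formula l0) (conj_lits l1 ls')
  end.

Definition is_algebra {W : Type} (Sig : (W -> Prop) -> Prop) : Prop :=
  Sig (fun _ => True) /\
  (forall X, Sig X -> Sig (fun w => ~ X w)) /\
  (forall X Y, Sig X -> Sig Y -> Sig (fun w => X w \/ Y w)).

Definition is_fa_prob {W : Type} (Sig : (W -> Prop) -> Prop)
  (mu : (W -> Prop) -> R) : Prop :=
  mu (fun _ => True) = 1 /\
  (forall X, Sig X -> 0 <= mu X) /\
  (forall X Y, Sig X -> Sig Y -> (forall w, X w -> Y w -> False) ->
     mu (fun w => X w \/ Y w) = mu X + mu Y).

Record ups : Type := mkUPS {
  ups_W : Type;
  ups_Sig : (ups_W -> Prop) -> Prop;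
  ups_P : ((ups_W -> Prop) -> R) -> Prop;
  ups_pi : ups_W -> nat -> bool;
  ups_alg : is_algebra ups_Sig;
  ups_meas : forall mu, ups_P mu -> is_fa_prob ups_Sig mu;
  ups_nonempty : exists mu, ups_P mu;
  ups_prim : forall p : nat, ups_Sig (fun w => ups_pi w p = true) }.

Definition psem (M : ups) (phi : pformula) : ups_W M -> Prop :=
  fun w => peval (ups_pi M w) phi = true.

Definition upper (M : ups) (X : ups_W M -> Prop) : R :=
  real (Lub_Rbar (fun r => exists mu, ups_P M mu /\ r = mu X)).

Fixpoint lsat (M : ups) (f : lformula) : Prop :=
  match f with
  | LBasic t a =>
      fold_right (fun s acc => fst s * upper M (psem M (snd s)) + acc) 0
        (term_summands t) >= a
  | LNot g => ~ lsat M g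
  | LAnd g h => lsat M g /\ lsat M h
  end.

Definition satisfiable (f : lformula) : Prop := exists M : ups, lsat M f.

Definition at_most_worlds (M : ups) (n : nat) : Prop :=
  exists l : list (ups_W M), (forall w, In w l) /\ (length l <= n)%nat.

Definition lin_val (ix : pformula -> nat) (x : nat -> R) (t : term) : R :=
  fold_right (fun s acc => fst s * x (ix (snd s)) + acc) 0 (term_summands t).

Definition lit_ineq (ix : pformula -> nat) (x : nat -> R) (l : literal) : Prop :=
  if lit_pos l then lin_val ix x (lit_term l) >= lit_alpha l
  else lin_val ix x (lit_term l) < lit_alpha l.

Definition solves_bar (ix : pformula -> nat) (x : nat -> R)
  (l0 : literal) (ls : list literal) : Prop :=
  forall l, In l (l0 :: ls) -> lit_ineq ix x l.

(* valuation v satisfies  \/_{J subset {1..m}, |J| = k} /\_{j in J} rho_{i_j},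
   where positions 1..m are coded 0..m-1 and i_j = idx (j-1) *)
Definition big_disj (rho : nat -> pformula) (m : nat) (idx : nat -> nat)
  (k : nat) (v : nat -> bool) : Prop :=
  exists J : list nat, NoDup J /\ length J = k /\
    (forall j, In j J -> (j < m)%nat) /\
    (forall j, In j J -> peval v (rho (idx j)) = true).

Definition sumx (x : nat -> R) (m : nat) (idx : nat -> nat) : R :=
  fold_right (fun j acc => x (idx j) + acc) 0 (seq 0 m).

(* x solves hat f (with bound Bb = B_{2^N}, and MN = 2^{2^N} variables) *)
Definition solves_hat (rho : nat -> pformula) (ix : pformula -> nat)
  (MN Bb : nat) (l0 : literal) (ls : list literal) (x : nat -> R) : Prop :=
  solves_bar ix x l0 ls /\
  x 1%nat = 0 /\ x MN = 1 /\
  (forall i, (1 <= i <= MN)%nat -> x i >= 0) /\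
  (forall (m n k : nat) (idx : nat -> nat),
     (m <= Bb)%nat -> (n <= Bb)%nat -> (k <= Bb)%nat ->
     (* i_1..i_m are idx 0..idx (m-1); i_{m+1} is idx m *)
     (forall j, (j <= m)%nat -> (1 <= idx j <= MN)%nat) ->
     (forall v, peval v (rho (idx m)) = true -> big_disj rho m idx (k + n) v) ->
     (forall v, big_disj rho m idx k v) ->
     sumx x m idx - INR n * x (idx m) >= INR k).

Definition rho_listing (ps : list nat) (MN : nat) (rho : nat -> pformula) : Prop :=
  (forall i, (1 <= i <= MN)%nat -> forall p, In p (pvars (rho i)) -> In p ps) /\
  (forall i j, (1 <= i <= MN)%nat -> (1 <= j <= MN)%nat ->
     pequiv (rho i) (rho j) -> i = j) /\
  (forall phi, (forall p, In p (pvars phi) -> In p ps) ->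
     exists i, (1 <= i <= MN)%nat /\ pequiv phi (rho i)) /\
  pequiv (rho 1%nat) PFalse /\
  pequiv (rho MN) PTrue.

Definition lit_forms (l : literal) : list pformula :=
  map snd (term_summands (lit_term l)).

Definition index_map (rho : nat -> pformula) (MN : nat) (ix : pformula -> nat)
  (l0 : literal) (ls : list literal) : Prop :=
  forall l phi, In l (l0 :: ls) -> In phi (lit_forms l) ->
    (1 <= ix phi <= MN)%nat /\ pequiv (rho (ix phi)) phi.

(* Main.v *)
Require Import Defs.
From Stdlib Require Import Reals List Arith.
From Coquelicot Require Import Rbar Lub.
From Stdlib Require Import ZArith Lia Lra Psatz Bool FunctionalExtensionality PropExtensionality Classical ClassicalEpsilon Peano_dec.
Import ListNotations.
Open Scope R_scope.

Fixpoint sR (n : nat) (f : nat -> R) : R :=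
  match n with O => 0 | S n' => sR n' f + f n' end.
Fixpoint sZ (n : nat) (f : nat -> Z) : Z :=
  match n with O => 0%Z | S n' => (sZ n' f + f n')%Z end.
Fixpoint sN (n : nat) (f : nat -> nat) : nat :=
  match n with O => O | S n' => (sN n' f + f n')%nat end.

Lemma sR_ext n f g : (forall i, (i < n)%nat -> f i = g i) -> sR n f = sR n g.
Proof. induction n; simpl; intros H; auto. rewrite IHn by (intros; apply H; lia). rewrite H by lia. auto. Qed.
Lemma sZ_ext n f g : (forall i, (i < n)%nat -> f i = g i) -> sZ n f = sZ n g.
Proof. induction n; simpl; intros H; auto. rewrite IHn by (intros; apply H; lia). rewrite H by lia. auto. Qed.
Lemma sN_ext n f g : (forall i, (i < n)%nat -> f i = g i) -> sN n f = sN n g.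
Proof. induction n; simpl; intros H; auto. rewrite IHn by (intros; apply H; lia). rewrite H by lia. auto. Qed.
Lemma sR_plus n f g : sR n (fun i => f i + g i) = sR n f + sR n g.
Proof. induction n; simpl; [lra|]. rewrite IHn; lra. Qed.
Lemma sZ_plus n f g : sZ n (fun i => (f i + g i)%Z) = (sZ n f + sZ n g)%Z.
Proof. induction n; simpl; [lia|]. rewrite IHn; lia. Qed.
Lemma sR_scal n a f : sR n (fun i => a * f i) = a * sR n f.
Proof. induction n; simpl; [lra|]. rewrite IHn; lra. Qed.
Lemma sZ_scal n a f : sZ n (fun i => (a * f i)%Z) = (a * sZ n f)%Z.
Proof. induction n; simpl; [lia|]. rewrite IHn; lia. Qed.
Lemma sR_zero n : sR n (fun _ => 0) = 0.
Proof. induction n; simpl; [lra|]. rewrite IHn; lra. Qed.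
Lemma sZ_zero n : sZ n (fun _ => 0%Z) = 0%Z.
Proof. induction n; simpl; [lia|]. rewrite IHn; lia. Qed.
Lemma sR_swap n m h : sR n (fun i => sR m (fun j => h i j)) = sR m (fun j => sR n (fun i => h i j)).
Proof. induction n; simpl. rewrite sR_zero; auto. rewrite IHn, <- sR_plus. auto. Qed.
Lemma sR_add n m f : sR (n + m) f = sR n f + sR m (fun i => f (n + i)%nat).
Proof. induction m. rewrite Nat.add_0_r; simpl; lra. rewrite Nat.add_succ_r; simpl; rewrite IHm; lra. Qed.
Lemma sZ_add n m f : sZ (n + m) f = (sZ n f + sZ m (fun i => f (n + i)%nat))%Z.
Proof. induction m. rewrite Nat.add_0_r; simpl; lia. rewrite Nat.add_succ_r; simpl; rewrite IHm; lia. Qed.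
Lemma sN_add n m f : sN (n + m) f = (sN n f + sN m (fun i => f (n + i)%nat))%nat.
Proof. induction m. rewrite Nat.add_0_r; simpl; lia. rewrite Nat.add_succ_r; simpl; rewrite IHm; lia. Qed.
Lemma sR_one n j f : (j < n)%nat -> sR n (fun i => if Nat.eqb i j then f i else 0) = f j.
Proof. induction n; intros Hj; [lia|]. simpl. destruct (Nat.eqb_spec n j).
 - subst. rewrite sR_ext with (g := fun _ => 0), sR_zero. lra.
   intros i Hi; destruct (Nat.eqb_spec i j); [lia|auto].
 - rewrite IHn by lia. lra. Qed.
Lemma sZ_one n j f : (j < n)%nat -> sZ n (fun i => if Nat.eqb i j then f i else 0%Z) = f j.
Proof. induction n; intros Hj; [lia|]. simpl. destruct (Nat.eqb_spec n j).
 - subst. rewrite sZ_ext with (g := fun _ => 0%Z), sZ_zero. lia.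
   intros i Hi; destruct (Nat.eqb_spec i j); [lia|auto].
 - rewrite IHn by lia. lia. Qed.
Lemma IZR_sZ n f : IZR (sZ n f) = sR n (fun i => IZR (f i)).
Proof. induction n; simpl; auto. rewrite plus_IZR, IHn; auto. Qed.
Lemma Z_sN n f : Z.of_nat (sN n f) = sZ n (fun i => Z.of_nat (f i)).
Proof. induction n; simpl; auto. rewrite Nat2Z.inj_add, IHn; auto. Qed.
Lemma INR_sN n f : INR (sN n f) = sR n (fun i => INR (f i)).
Proof. induction n; simpl; auto. rewrite plus_INR, IHn; auto. Qed.
Lemma sR_le n f g : (forall i, (i < n)%nat -> f i <= g i) -> sR n f <= sR n g.
Proof. induction n; simpl; intros H; [lra|]. specialize (IHn (fun i Hi => H i ltac:(lia))). specialize (H n ltac:(lia)). lra. Qed.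
Lemma sN_le n f g : (forall i, (i < n)%nat -> (f i <= g i)%nat) -> (sN n f <= sN n g)%nat.
Proof. induction n; simpl; intros H; [lia|]. specialize (IHn (fun i Hi => H i ltac:(lia))). specialize (H n ltac:(lia)). lia. Qed.
Lemma sN_ge_term n f j : (j < n)%nat -> (f j <= sN n f)%nat.
Proof. induction n; simpl; intros; [lia|]. destruct (Nat.eq_dec j n); subst; [lia|]. specialize (IHn ltac:(lia)); lia. Qed.

Lemma INR_Z2N z : (0 <= z)%Z -> INR (Z.to_nat z) = IZR z.
Proof. intros; rewrite INR_IZR_INZ, Z2Nat.id; auto. Qed.

Lemma fold_min_le (B : list R) z : forall b, In b B -> fold_right Rmin z B <= b.
Proof. induction B; simpl; intros b Hb; [contradiction|]. destruct Hb as [<-|Hb].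
 apply Rmin_l. eapply Rle_trans; [apply Rmin_r| auto]. Qed.

Lemma interval_pick (A B : list R) : (forall a b, In a A -> In b B -> a <= b) ->
  exists t, (forall a, In a A -> a <= t) /\ (forall b, In b B -> t <= b).
Proof. induction A as [|a A IH]; intros H.
 - exists (fold_right Rmin 0 B). split; [simpl; tauto|apply fold_min_le].
 - destruct IH as [t [H1 H2]]. intros; apply H; simpl; auto.
   exists (Rmax a t). split.
   + intros a' [<-|Ha']. apply Rmax_l. eapply Rle_trans; [apply H1; auto|apply Rmax_r].
   + intros b Hb. apply Rmax_lub; auto. apply H; simpl; auto. Qed.

Lemma pair_real rp rn Dp Dn : rp > 0 -> rn < 0 -> -rn*Dp + rp*Dn >= 0 -> -Dp/rp <= -Dn/rn.
Proof. intros Hp Hn H.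
 assert (E1 : -Dp/rp = (Dp*rn)/(rp*(-rn))) by (field; lra).
 assert (E2 : -Dn/rn = (Dn*rp)/(rp*(-rn))) by (field; lra).
 rewrite E1, E2. unfold Rdiv. apply Rmult_le_compat_r.
 left; apply Rinv_0_lt_compat; nra. nra. Qed.

Definition upd (mu : nat -> R) j t : nat -> R := fun k => if Nat.eqb k j then t else mu k.

Section FM.
Variable c : nat -> nat -> Z.
Variable p K : nat.

Definition row (l : nat -> nat) (j : nat) : Z := sZ p (fun i => (Z.of_nat (l i) * c i j)%Z).
Definition rhs (d : nat -> R) (l : nat -> nat) : R := sR p (fun i => INR (l i) * d i).
Definition lhs (l : nat -> nat) (mu : nat -> R) : R := sR K (fun j => IZR (row l j) * mu j).
Definition comb (a : nat) (l1 : nat -> nat) (b : nat) (l2 : nat -> nat) : nat -> nat :=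
  fun i => (a * l1 i + b * l2 i)%nat.

Lemma row_comb a l1 b l2 j : row (comb a l1 b l2) j = (Z.of_nat a * row l1 j + Z.of_nat b * row l2 j)%Z.
Proof. unfold row, comb. rewrite <- !sZ_scal, <- sZ_plus. apply sZ_ext; intros. rewrite Nat2Z.inj_add, !Nat2Z.inj_mul. ring. Qed.
Lemma lhs_comb a l1 b l2 mu : lhs (comb a l1 b l2) mu = INR a * lhs l1 mu + INR b * lhs l2 mu.
Proof. unfold lhs. rewrite <- !sR_scal, <- sR_plus. apply sR_ext; intros. rewrite row_comb, plus_IZR, !mult_IZR, <- !INR_IZR_INZ. ring. Qed.
Lemma rhs_comb d a l1 b l2 : rhs d (comb a l1 b l2) = INR a * rhs d l1 + INR b * rhs d l2.
Proof. unfold rhs, comb. rewrite <- !sR_scal, <- sR_plus. apply sR_ext; intros. rewrite plus_INR, !mult_INR. ring. Qed.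
Lemma lhs_upd l mu j t : (j < K)%nat -> lhs l (upd mu j t) = lhs l mu + IZR (row l j) * (t - mu j).
Proof. intros Hj. unfold lhs.
 rewrite sR_ext with (g := fun k => IZR (row l k) * mu k + (if Nat.eqb k j then IZR (row l k) * (t - mu k) else 0)).
 rewrite sR_plus, sR_one by auto. auto.
 intros k Hk. unfold upd. destruct (Nat.eqb_spec k j); subst; ring. Qed.

Definition sat (d : nat -> R) (L : list (nat -> nat)) (mu : nat -> R) : Prop :=
  forall l, In l L -> lhs l mu >= rhs d l.

Definition FMstep (j : nat) (L : list (nat -> nat)) : list (nat -> nat) :=
  filter (fun l => Z.eqb (row l j) 0) L ++
  flat_map (fun lp => map (fun ln => comb (Z.to_nat (- row ln j)) lp (Z.to_nat (row lp j)) ln)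
                            (filter (fun l => Z.ltb (row l j) 0) L))
           (filter (fun l => Z.ltb 0 (row l j)) L).

Lemma FMstep_sat d j L mu : (j < K)%nat -> sat d (FMstep j L) mu ->
  exists t, sat d L (upd mu j t).
Proof.
 intros Hj Hs.
 set (e := fun l => mu j + (rhs d l - lhs l mu) / IZR (row l j)).
 destruct (interval_pick (map e (filter (fun l => Z.ltb 0 (row l j)) L))
                         (map e (filter (fun l => Z.ltb (row l j) 0) L))) as [t [H1 H2]].
 - intros a b Ha Hb. apply in_map_iff in Ha as [lp [<- Hlp]]. apply in_map_iff in Hb as [ln [<- Hln]].
   assert (Hc := Hs (comb (Z.to_nat (- row ln j)) lp (Z.to_nat (row lp j)) ln)).
   apply filter_In in Hlp as [Hlp Pp]. apply filter_In in Hln as [Hln Pn].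
   apply Z.ltb_lt in Pp. apply Z.ltb_lt in Pn.
   rewrite lhs_comb, rhs_comb, !INR_Z2N in Hc by lia.
   assert (Hc' : lhs (comb (Z.to_nat (- row ln j)) lp (Z.to_nat (row lp j)) ln) mu >=
                 rhs d (comb (Z.to_nat (- row ln j)) lp (Z.to_nat (row lp j)) ln)).
   { apply Hs. apply in_or_app; right. apply in_flat_map. exists lp. split.
     apply filter_In; split; auto; apply Z.ltb_lt; auto.
     apply in_map_iff. exists ln; split; auto. apply filter_In; split; auto; apply Z.ltb_lt; auto. }
   rewrite lhs_comb, rhs_comb, !INR_Z2N in Hc' by lia.
   rewrite opp_IZR in Hc'.
   unfold e. apply Rplus_le_compat_l.
   assert (Rp : IZR (row lp j) > 0) by (apply IZR_lt; lia).
   assert (Rn : IZR (row ln j) < 0) by (apply IZR_lt; lia).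
   replace ((rhs d lp - lhs lp mu)) with (- (lhs lp mu - rhs d lp)) by ring.
   replace ((rhs d ln - lhs ln mu)) with (- (lhs ln mu - rhs d ln)) by ring.
   apply pair_real; auto. lra.
 - exists t. intros l Hl. rewrite lhs_upd by auto.
   destruct (Z.lt_trichotomy (row l j) 0) as [Hn|[H0|Hp]].
   + assert (Ht : t <= e l) by (apply H2, in_map, filter_In; split; auto; apply Z.ltb_lt; auto).
     unfold e in Ht. assert (Rn : IZR (row l j) < 0) by (apply IZR_lt; lia).
     assert (IZR (row l j) * (t - mu j) >= IZR (row l j) * ((rhs d l - lhs l mu) / IZR (row l j))).
     { apply Rle_ge. apply Rmult_le_compat_neg_l; lra. }
     replace (IZR (row l j) * ((rhs d l - lhs l mu) / IZR (row l j))) with (rhs d l - lhs l mu) in H by (field; lra).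
     lra.
   + assert (lhs l mu >= rhs d l). { apply Hs. apply in_or_app; left. apply filter_In; split; auto. apply Z.eqb_eq; auto. }
     rewrite H0. lra.
   + assert (Ht : e l <= t) by (apply H1, in_map, filter_In; split; auto; apply Z.ltb_lt; auto).
     unfold e in Ht. assert (Rp : IZR (row l j) > 0) by (apply IZR_lt; lia).
     assert (IZR (row l j) * (t - mu j) >= IZR (row l j) * ((rhs d l - lhs l mu) / IZR (row l j))).
     { apply Rle_ge. apply Rmult_le_compat_l; lra. }
     replace (IZR (row l j) * ((rhs d l - lhs l mu) / IZR (row l j))) with (rhs d l - lhs l mu) in H by (field; lra).
     lra.
Qed.

Fixpoint FMall (k : nat) (L : list (nat -> nat)) : list (nat -> nat) :=
  match k with O => L | S k' => FMstep k' (FMall k' L) end.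

Lemma FMall_sat d L : forall k, (k <= K)%nat -> forall mu, sat d (FMall k L) mu -> exists mu', sat d L mu'.
Proof. induction k; simpl; intros Hk mu Hs. exists mu; auto.
 destruct (FMstep_sat d k (FMall k L) mu ltac:(lia) Hs) as [t Ht]. eapply IHk; [lia|eauto]. Qed.

Lemma FMall_zero L : forall k l, In l (FMall k L) -> forall j, (j < k)%nat -> row l j = 0%Z.
Proof. induction k; simpl; intros l Hl j Hj; [lia|].
 unfold FMstep in Hl. apply in_app_or in Hl as [Hl|Hl].
 - apply filter_In in Hl as [Hl E]. apply Z.eqb_eq in E.
   destruct (Nat.eq_dec j k); subst; auto. apply IHk; auto; lia.
 - apply in_flat_map in Hl as [lp [Hlp Hl]]. apply in_map_iff in Hl as [ln [<- Hln]].
   apply filter_In in Hlp as [Hlp Pp]. apply filter_In in Hln as [Hln Pn].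
   apply Z.ltb_lt in Pp. apply Z.ltb_lt in Pn.
   rewrite row_comb.
   destruct (Nat.eq_dec j k); subst.
   + rewrite !Z2Nat.id by lia. ring.
   + rewrite (IHk lp Hlp j), (IHk ln Hln j) by lia. ring.
Qed.

Definition unitv (i : nat) : nat -> nat := fun i' => if Nat.eqb i' i then 1%nat else 0%nat.
Definition L0 : list (nat -> nat) := map unitv (seq 0 p).
Definition cert : list (nat -> nat) := FMall K L0.

Lemma row_unit i j : (i < p)%nat -> row (unitv i) j = c i j.
Proof. intros Hi. unfold row, unitv.
 rewrite sZ_ext with (g := fun i' => if Nat.eqb i' i then c i' j else 0%Z). apply (sZ_one p i (fun i' => c i' j)); auto.
 intros k _. destruct (Nat.eqb_spec k i); [change (Z.of_nat 1) with 1%Z|change (Z.of_nat 0) with 0%Z]; ring. Qed.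
Lemma rhs_unit d i : (i < p)%nat -> rhs d (unitv i) = d i.
Proof. intros Hi. unfold rhs, unitv.
 rewrite sR_ext with (g := fun i' => if Nat.eqb i' i then d i' else 0). apply (sR_one p i d); auto.
 intros k _. destruct (Nat.eqb_spec k i); simpl; ring. Qed.

Theorem FM_farkas d : (forall l, In l cert -> rhs d l <= 0) ->
  exists mu, forall i, (i < p)%nat -> sR K (fun j => IZR (c i j) * mu j) >= d i.
Proof. intros H.
 destruct (FMall_sat d L0 K (le_n _) (fun _ => 0)) as [mu Hmu].
 - intros l Hl. unfold lhs. rewrite sR_ext with (g := fun _ => 0), sR_zero. apply Rle_ge, H; auto.
   intros; ring.
 - exists mu. intros i Hi. specialize (Hmu (unitv i)).
   unfold lhs in Hmu. rewrite rhs_unit in Hmu by auto.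
   rewrite sR_ext with (g := fun j => IZR (row (unitv i) j) * mu j). apply Hmu.
   apply in_map, in_seq; lia. intros; rewrite row_unit; auto.
Qed.

Theorem cert_zero l j : In l cert -> (j < K)%nat -> row l j = 0%Z.
Proof. intros; eapply FMall_zero; eauto. Qed.
End FM.


Lemma set_ext {W : Type} (X Y : W -> Prop) : (forall w, X w <-> Y w) -> X = Y.
Proof. intros H; apply functional_extensionality; intros w; apply propositional_extensionality; auto. Qed.

Definition lsum {A : Type} (g : A -> R) (L : list A) : R := fold_right (fun a acc => g a + acc) 0 L.

Lemma lsum_app {A} (g : A -> R) L1 L2 : lsum g (L1 ++ L2) = lsum g L1 + lsum g L2.
Proof. induction L1; simpl; [lra|]. unfold lsum in *; simpl; rewrite IHL1; lra. Qed.
Lemma lsum_plus {A} (f g : A -> R) L : lsum (fun a => f a + g a) L = lsum f L + lsum g L.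
Proof. induction L; unfold lsum in *; simpl; [lra|]. rewrite IHL; lra. Qed.
Lemma lsum_scal {A} a (f : A -> R) L : lsum (fun x => a * f x) L = a * lsum f L.
Proof. induction L; unfold lsum in *; simpl; [lra|]. rewrite IHL; lra. Qed.
Lemma lsum_ext {A} (f g : A -> R) L : (forall a, In a L -> f a = g a) -> lsum f L = lsum g L.
Proof. induction L; unfold lsum in *; simpl; intros H; auto. rewrite H, IHL; auto. Qed.
Lemma lsum_le {A} (f g : A -> R) L : (forall a, In a L -> f a <= g a) -> lsum f L <= lsum g L.
Proof. induction L; unfold lsum in *; simpl; intros H; [lra|].
 assert (f a <= g a) by auto. assert (fold_right (fun a0 acc => f a0 + acc) 0 L <= fold_right (fun a0 acc => g a0 + acc) 0 L) by auto. lra. Qed.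
Lemma lsum_zero {A} (L : list A) : lsum (fun _ => 0) L = 0.
Proof. induction L; unfold lsum in *; simpl; [lra|]. rewrite IHL; lra. Qed.
Lemma lsum_cons {A} (g : A -> R) a L : lsum g (a :: L) = g a + lsum g L.
Proof. reflexivity. Qed.
Lemma lsum_swap {A B} (h : A -> B -> R) L1 L2 :
  lsum (fun a => lsum (fun b => h a b) L2) L1 = lsum (fun b => lsum (fun a => h a b) L1) L2.
Proof. induction L1.
 - transitivity 0; [reflexivity|]. symmetry; rewrite <- (lsum_zero L2); apply lsum_ext; reflexivity.
 - rewrite lsum_cons, IHL1.
   rewrite (lsum_ext (fun b => lsum (fun a0 => h a0 b) (a::L1)) (fun b => h a b + lsum (fun a0 => h a0 b) L1)) by (intros; reflexivity).
   rewrite lsum_plus. reflexivity. Qed.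
Lemma lsum_flat_map {A B} (f : A -> list B) (g : B -> R) L :
  lsum g (flat_map f L) = lsum (fun a => lsum g (f a)) L.
Proof. induction L; simpl; auto. rewrite lsum_app, IHL. auto. Qed.
Lemma lsum_seq g n : lsum g (seq 0 n) = sR n g.
Proof. induction n; [reflexivity|]. rewrite seq_S, lsum_app, IHn. simpl. unfold lsum; simpl. lra. Qed.
Lemma lsum_ind {A} (g : A -> bool) L : lsum (fun a => if g a then 1 else 0) L = INR (length (filter g L)).
Proof. induction L; simpl; auto. unfold lsum in *; simpl. rewrite IHL. destruct (g a); simpl length; try rewrite S_INR; lra. Qed.

Lemma peval_agree (v v' : nat -> bool) phi : (forall q, In q (pvars phi) -> v q = v' q) -> peval v phi = peval v' phi.
Proof. induction phi; simpl; intros H; [reflexivity| apply H; simpl; auto | rewrite IHphi; auto | ].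
 rewrite IHphi1, IHphi2; auto; intros; apply H; apply in_or_app; auto. Qed.

Definition upd_b (u : nat -> bool) (p : nat) (b : bool) : nat -> bool :=
  fun q => if Nat.eqb q p then b else u q.

Section Meas.
Variable W : Type.
Variable Sig : (W -> Prop) -> Prop.
Variable mu : (W -> Prop) -> R.
Variable pi : W -> nat -> bool.
Hypothesis Halg : is_algebra Sig.
Hypothesis Hmu : is_fa_prob Sig mu.
Hypothesis Hprim : forall p, Sig (fun w => pi w p = true).

Lemma Sig_T : Sig (fun _ => True). Proof. apply Halg. Qed.
Lemma Sig_F : Sig (fun _ => False).
Proof. replace (fun _ : W => False) with (fun w : W => ~ (fun _ : W => True) w). apply Halg, Halg.
 apply set_ext; intros; tauto. Qed.
Lemma Sig_not X : Sig X -> Sig (fun w => ~ X w). Proof. apply Halg. Qed.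
Lemma Sig_and X Y : Sig X -> Sig Y -> Sig (fun w => X w /\ Y w).
Proof. intros HX HY. replace (fun w => X w /\ Y w) with (fun w => ~ (fun w => (fun w => ~ X w) w \/ (fun w => ~ Y w) w) w).
 apply Sig_not, Halg; apply Sig_not; auto. apply set_ext; intros; tauto. Qed.

Lemma mu_add X Y : Sig X -> Sig Y -> (forall w, X w -> Y w -> False) -> mu (fun w => X w \/ Y w) = mu X + mu Y.
Proof. apply Hmu. Qed.
Lemma mu_F : mu (fun _ => False) = 0.
Proof. assert (H := mu_add (fun _ => False) (fun _ => False) Sig_F Sig_F (fun _ f _ => f)).
 cbv beta in H. replace (fun w : W => False \/ False) with (fun _ : W => False) in H by (apply set_ext; tauto). lra. Qed.
Lemma mu_split X A : Sig X -> Sig A -> mu X = mu (fun w => X w /\ A w) + mu (fun w => X w /\ ~ A w).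
Proof. intros. rewrite <- mu_add. f_equal. apply set_ext; intros w; destruct (classic (A w)); tauto.
 apply Sig_and; auto. apply Sig_and; auto. apply Sig_not; auto. intros w; tauto. Qed.
Lemma mu_ge0 X : Sig X -> 0 <= mu X. Proof. apply Hmu. Qed.
Lemma mu_le1 X : Sig X -> mu X <= 1.
Proof. intros HX. destruct Hmu as [H1 _]. rewrite <- H1.
 rewrite (mu_split (fun _ => True) X Sig_T HX).
 replace (fun w : W => True /\ X w) with X by (apply set_ext; tauto).
 assert (0 <= mu (fun w => True /\ ~ X w)) by (apply mu_ge0, Sig_and; [apply Sig_T|apply Sig_not; auto]). lra. Qed.

Definition pS (phi : pformula) : W -> Prop := fun w => peval (pi w) phi = true.

Lemma Sig_pS phi : Sig (pS phi).
Proof. unfold pS; induction phi; simpl.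
 - replace (fun _ : W => true = true) with (fun _ : W => True) by (apply set_ext; tauto). apply Sig_T.
 - apply Hprim.
 - replace (fun w => negb (peval (pi w) phi) = true) with (fun w => ~ (fun w => peval (pi w) phi = true) w).
   apply Sig_not; auto. apply set_ext; intros w; destruct (peval (pi w) phi); simpl; intuition congruence.
 - replace (fun w => (peval (pi w) phi1 && peval (pi w) phi2)%bool = true) with
     (fun w => (fun w => peval (pi w) phi1 = true) w /\ (fun w => peval (pi w) phi2 = true) w).
   apply Sig_and; auto. apply set_ext; intros w. rewrite Bool.andb_true_iff. tauto. Qed.

Fixpoint allA (ps : list nat) : list ((nat -> bool) * (W -> Prop)) :=
  match ps with
  | [] => [(fun _ => false, fun _ => True)]
  | p :: ps' => flat_map (fun uA => [(upd_b (fst uA) p true, fun w => snd uA w /\ pi w p = true);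
                                   (upd_b (fst uA) p false, fun w => snd uA w /\ ~ pi w p = true)]) (allA ps')
  end.

Lemma allA_props ps : forall uA, In uA (allA ps) -> Sig (snd uA) /\ forall w, snd uA w -> forall q, In q ps -> pi w q = fst uA q.
Proof. induction ps as [|p ps IH]; simpl; intros uA HuA.
 - destruct HuA as [<-|[]]. split; [apply Sig_T|simpl; tauto].
 - apply in_flat_map in HuA as [uB [HuB Hin]]. destruct (IH uB HuB) as [HS Hag].
   simpl in Hin. destruct Hin as [<-|[<-|[]]]; simpl; split.
   + apply Sig_and; auto.
   + intros w [Hw Hp] q Hq. unfold upd_b. destruct (Nat.eqb_spec q p); subst; auto. destruct Hq; [congruence|auto].
   + apply Sig_and; auto. apply Sig_not; auto.
   + intros w [Hw Hp] q Hq. unfold upd_b. destruct (Nat.eqb_spec q p); subst.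
     destruct (pi w p); congruence. destruct Hq; [congruence|auto]. Qed.

Lemma allA_decomp ps : forall X, Sig X -> mu X = lsum (fun uA => mu (fun w => X w /\ snd uA w)) (allA ps).
Proof. induction ps as [|p ps IH]; intros X HX; simpl.
 - unfold lsum; simpl. replace (fun w : W => X w /\ True) with X by (apply set_ext; tauto). lra.
 - rewrite lsum_flat_map. rewrite (IH X HX). apply lsum_ext. intros uA HuA.
   destruct (allA_props ps uA HuA) as [HS _].
   unfold lsum; simpl.
   rewrite (mu_split (fun w => X w /\ snd uA w) (fun w => pi w p = true)) by (try apply Sig_and; auto).
   f_equal; [|rewrite Rplus_0_r]; f_equal; apply set_ext; intros; tauto. Qed.

Lemma mu_pS_atom ps phi uA : (forall q, In q (pvars phi) -> In q ps) -> In uA (allA ps) ->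
  mu (fun w => pS phi w /\ snd uA w) = if peval (fst uA) phi then mu (snd uA) else 0.
Proof. intros Hv HuA. destruct (allA_props ps uA HuA) as [HS Hag].
 assert (E : forall w, snd uA w -> peval (pi w) phi = peval (fst uA) phi).
 { intros w Hw. apply peval_agree. intros q Hq. apply Hag; auto. }
 destruct (peval (fst uA) phi) eqn:Hp.
 - f_equal. apply set_ext; intros w; unfold pS; split; [tauto|]. intros Hw; split; [rewrite E; auto|auto].
 - rewrite <- mu_F. f_equal. apply set_ext; intros w; unfold pS; split; [|tauto].
   intros [H1 H2]. rewrite E in H1; auto; congruence. Qed.

Lemma mu_pS ps phi : (forall q, In q (pvars phi) -> In q ps) ->
  mu (pS phi) = lsum (fun uA => (if peval (fst uA) phi then 1 else 0) * mu (snd uA)) (allA ps).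
Proof. intros Hv. rewrite (allA_decomp ps (pS phi) (Sig_pS phi)). apply lsum_ext. intros uA HuA.
 rewrite (mu_pS_atom ps); auto. destruct (peval (fst uA) phi); ring. Qed.

Lemma mu_T_sum ps : lsum (fun uA => mu (snd uA)) (allA ps) = 1.
Proof. destruct Hmu as [H1 _]. rewrite <- H1. rewrite (allA_decomp ps _ Sig_T).
 apply lsum_ext; intros. f_equal. apply set_ext; tauto. Qed.

Lemma count_big_disj (rho : nat -> pformula) m idx k v : big_disj rho m idx k v ->
  INR k <= lsum (fun j => if peval v (rho (idx j)) then 1 else 0) (seq 0 m).
Proof. intros [J [HJ [HL [Hm Ht]]]]. rewrite (lsum_ind (fun j => peval v (rho (idx j)))).
 apply le_INR. rewrite <- HL. apply NoDup_incl_length; auto.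
 intros j Hj. apply filter_In. split; auto. apply in_seq. specialize (Hm j Hj). lia. Qed.

Lemma up3_sound ps (rho : nat -> pformula) m n k (idx : nat -> nat) :
  (forall j, (j <= m)%nat -> forall q, In q (pvars (rho (idx j))) -> In q ps) ->
  (forall v, peval v (rho (idx m)) = true -> big_disj rho m idx (k + n) v) ->
  (forall v, big_disj rho m idx k v) ->
  lsum (fun j => mu (pS (rho (idx j)))) (seq 0 m) - INR n * mu (pS (rho (idx m))) >= INR k.
Proof. intros Hv H1 H2.
 rewrite lsum_ext with (g := fun j => lsum (fun uA => (if peval (fst uA) (rho (idx j)) then 1 else 0) * mu (snd uA)) (allA ps)).
 2:{ intros j Hj. apply in_seq in Hj. apply mu_pS; intros; apply (Hv j); auto; lia. }
 rewrite (mu_pS ps) by (apply Hv; auto).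
 rewrite lsum_swap.
 set (a := fun uA : (nat -> bool) * (W -> Prop) => mu (snd uA)).
 assert (Hle : lsum (fun uA => INR k * a uA) (allA ps) <=
   lsum (fun uA => lsum (fun j => (if peval (fst uA) (rho (idx j)) then 1 else 0) * a uA) (seq 0 m)
          + (- INR n) * ((if peval (fst uA) (rho (idx m)) then 1 else 0) * a uA)) (allA ps)).
 { apply lsum_le. intros uA HuA. destruct (allA_props ps uA HuA) as [HS _].
   assert (Hm : 0 <= a uA) by (apply mu_ge0; auto).
   rewrite (lsum_ext _ (fun j => a uA * (if peval (fst uA) (rho (idx j)) then 1 else 0))) by (intros; ring).
   rewrite lsum_scal.
   destruct (peval (fst uA) (rho (idx m))) eqn:HE.
   - assert (Hc := count_big_disj rho m idx (k + n) (fst uA) (H1 _ HE)). rewrite plus_INR in Hc. nra.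
   - assert (Hc := count_big_disj rho m idx k (fst uA) (H2 _)). nra. }
 rewrite lsum_plus, lsum_scal, lsum_scal in Hle. unfold a in Hle. rewrite (mu_T_sum ps) in Hle. lra.
Qed.
End Meas.


Lemma psem_Sig (M : ups) phi : ups_Sig M (psem M phi).
Proof. destruct (ups_nonempty M) as [mu Hmu].
 apply (Sig_pS (ups_W M) (ups_Sig M) (ups_pi M) (ups_alg M) (ups_prim M) phi). Qed.

Lemma upper_spec (M : ups) X : ups_Sig M X ->
  (forall mu, ups_P M mu -> mu X <= upper M X) /\
  (forall c, (forall mu, ups_P M mu -> mu X <= c) -> upper M X <= c).
Proof. intros HX. unfold upper.
 set (E := fun r => exists mu, ups_P M mu /\ r = mu X).
 assert (H := Lub_Rbar_correct E). destruct H as [Hub Hlub].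
 destruct (Lub_Rbar E) as [l| |] eqn:El; simpl.
 - split. intros mu Hmu. apply (Hub (mu X)). exists mu; auto.
   intros c Hc. apply (Hlub (Finite c)). intros r [mu [Hmu ->]]. simpl. auto.
 - exfalso. assert (Hle := Hlub (Finite 1)). simpl in Hle. apply Hle.
   intros r [mu [Hmu ->]]. simpl. apply (mu_le1 (ups_W M) (ups_Sig M) mu (ups_alg M) (ups_meas M mu Hmu)); auto.
 - exfalso. destruct (ups_nonempty M) as [mu Hmu]. apply (Hub (mu X)). exists mu; auto. Qed.

Lemma lsat_conj M l0 ls : lsat M (conj_lits l0 ls) <-> forall l, In l (l0 :: ls) -> lsat M (lit_formula l).
Proof. revert l0; induction ls as [|l1 ls IH]; intros l0; simpl.
 - split; [intros H l [<-|[]]; auto| intros H; apply H; auto].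
 - rewrite IH. split.
   + intros [H0 H] l [<-|Hl]; auto.
   + intros H; split; auto.
Qed.

Lemma lsat_lit M (ix : pformula -> nat) (x : nat -> R) l :
  (forall phi, In phi (lit_forms l) -> upper M (psem M phi) = x (ix phi)) ->
  (lsat M (lit_formula l) <-> lit_ineq ix x l).
Proof. intros H.
 assert (E : fold_right (fun s acc => fst s * upper M (psem M (snd s)) + acc) 0 (term_summands (lit_term l)) =
             lin_val ix x (lit_term l)).
 { unfold lin_val. change (lsum (fun s => fst s * upper M (psem M (snd s))) (term_summands (lit_term l)) =
      lsum (fun s => fst s * x (ix (snd s))) (term_summands (lit_term l))).
   apply lsum_ext. intros s Hs. rewrite H; auto. unfold lit_forms. apply in_map; auto. }
 unfold lit_formula, lit_ineq. destruct (lit_pos l); cbn [lsat]; rewrite E; [tauto|split; [apply Rnot_ge_lt|apply Rlt_not_ge]]. Qed.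

Lemma psem_equiv M a b : pequiv a b -> psem M a = psem M b.
Proof. intros H. apply set_ext; intros w. unfold psem. rewrite (H (ups_pi M w)). tauto. Qed.

Theorem soundness (Bb : nat) l0 ls rho ix :
  let f := conj_lits l0 ls in
  let N := length (props_of f) in
  let MN := (2 ^ (2 ^ N))%nat in
  rho_listing (props_of f) MN rho ->
  index_map rho MN ix l0 ls ->
  satisfiable f -> exists x : nat -> R, solves_hat rho ix MN Bb l0 ls x.
Proof. intros f N MN Hrho Hix [M HM].
 destruct Hrho as [Hvars [Hinj [Hsurj [H1 HMN]]]].
 set (x := fun i => upper M (psem M (rho i))).
 destruct (ups_nonempty M) as [mu0 Hmu0].
 assert (Hfa := ups_meas M). assert (Halg := ups_alg M). assert (Hpr := ups_prim M).
 exists x. split; [|split; [|split; [|split]]].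
 - intros l Hl. apply (lsat_lit M ix x l).
   + intros phi Hphi. destruct (Hix l phi Hl Hphi) as [_ He]. unfold x. rewrite (psem_equiv M _ _ He). auto.
   + apply (proj1 (lsat_conj M l0 ls) HM); auto.
 - unfold x. rewrite (psem_equiv M _ _ H1).
   replace (psem M PFalse) with (fun _ : ups_W M => False) by (apply set_ext; intros; unfold psem; simpl; intuition congruence).
   destruct (upper_spec M (fun _ => False)) as [Ha Hb]. apply Sig_F; auto.
   assert (forall mu, ups_P M mu -> mu (fun _ => False) = 0) by (intros; eapply mu_F; eauto).
   apply Rle_antisym. apply Hb; intros; rewrite H; auto; lra. rewrite <- (H mu0 Hmu0); auto.
 - unfold x. rewrite (psem_equiv M _ _ HMN).
   replace (psem M PTrue) with (fun _ : ups_W M => True) by (apply set_ext; intros; unfold psem; simpl; intuition congruence).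
   destruct (upper_spec M (fun _ => True)) as [Ha Hb]. apply Halg.
   assert (forall mu, ups_P M mu -> mu (fun _ => True) = 1) by (intros mu Hmu; apply (Hfa mu Hmu)).
   apply Rle_antisym. apply Hb; intros; rewrite H; auto; lra. rewrite <- (H mu0 Hmu0); auto.
 - intros i Hi. unfold x. destruct (upper_spec M _ (psem_Sig M (rho i))) as [Ha _].
   apply Rle_ge. eapply Rle_trans; [|apply (Ha mu0 Hmu0)].
   apply (mu_ge0 _ _ _ (Hfa mu0 Hmu0)). apply psem_Sig.
 - intros m n k idx Hm Hn Hk Hidx HA HB.
   assert (Hup : forall mu, ups_P M mu ->
     lsum (fun j => mu (psem M (rho (idx j)))) (seq 0 m) - INR n * mu (psem M (rho (idx m))) >= INR k).
   { intros mu Hmu. apply (up3_sound (ups_W M) (ups_Sig M) mu (ups_pi M) Halg (Hfa mu Hmu) Hpr (props_of f)); auto.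
     intros j Hj q Hq. apply (Hvars (idx j)); auto. }
   assert (Hge : forall mu, ups_P M mu -> lsum (fun j => mu (psem M (rho (idx j)))) (seq 0 m) <= sumx x m idx).
   { intros mu Hmu. unfold sumx. change (lsum (fun j => mu (psem M (rho (idx j)))) (seq 0 m) <= lsum (fun j => x (idx j)) (seq 0 m)).
     apply lsum_le. intros j _. unfold x. apply (upper_spec M _ (psem_Sig M _)); auto. }
   destruct n as [|n].
   + specialize (Hup mu0 Hmu0). specialize (Hge mu0 Hmu0). simpl INR in *. lra.
   + assert (Hpos : INR (S n) > 0) by (apply lt_0_INR; lia).
     assert (x (idx (S m - 1)%nat) = x (idx m)) by (f_equal; f_equal; lia).
     assert (Hx : x (idx m) <= (sumx x m idx - INR k) / INR (S n)).
     { unfold x at 1. apply (upper_spec M _ (psem_Sig M _)). intros mu Hmu.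
       specialize (Hup mu Hmu). specialize (Hge mu Hmu).
       apply Rmult_le_reg_l with (INR (S n)); auto.
       replace (INR (S n) * ((sumx x m idx - INR k) / INR (S n))) with (sumx x m idx - INR k) by (field; lra).
       lra. }
     apply Rmult_le_compat_l with (r := INR (S n)) in Hx; [|lra].
     replace (INR (S n) * ((sumx x m idx - INR k) / INR (S n))) with (sumx x m idx - INR k) in Hx by (field; lra).
     lra.
Qed.


Fixpoint allv (ps : list nat) : list (nat -> bool) :=
  match ps with
  | [] => [fun _ => false]
  | p :: ps' => flat_map (fun u => [upd_b u p true; upd_b u p false]) (allv ps')
  end.

Lemma allv_length ps : length (allv ps) = (2 ^ length ps)%nat.
Proof. induction ps; simpl; auto. rewrite <- IHps. clear. induction (allv ps); simpl; auto. lia. Qed.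

Lemma allv_cover ps (v : nat -> bool) : exists u, In u (allv ps) /\ forall q, In q ps -> v q = u q.
Proof. induction ps as [|p ps IH]; simpl.
 - exists (fun _ => false). split; auto. tauto.
 - destruct IH as [u [Hu Ha]]. exists (upd_b u p (v p)). split.
   + apply in_flat_map. exists u. split; auto. destruct (v p); simpl; auto.
   + intros q Hq. unfold upd_b. destruct (Nat.eqb_spec q p); subst; auto. destruct Hq; [congruence|auto]. Qed.

Fixpoint allbl (K : nat) : list (list bool) :=
  match K with
  | O => [[]]
  | S K' => flat_map (fun b => [true :: b; false :: b]) (allbl K')
  end.

Lemma allbl_length K : length (allbl K) = (2 ^ K)%nat.
Proof. induction K; simpl; auto. rewrite <- IHK. clear. induction (allbl K); simpl; auto. lia. Qed.

Lemma allbl_in K b : length b = K -> In b (allbl K).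
Proof. revert b; induction K; intros b Hb; destruct b as [|x b]; simpl in *; try lia; auto.
 apply in_flat_map. exists b. split. apply IHK; lia. destruct x; simpl; auto. Qed.

Definition memb (K s a : nat) : bool := nth a (nth s (allbl K) []) false.
Definition b2z (b : bool) : Z := if b then 1%Z else 0%Z.
Definition b2r (b : bool) : R := if b then 1 else 0.

Definition pK (K : nat) : nat := (K + 1 + 2 ^ K + 1)%nat.

Definition csys (K e : nat) (i a : nat) : Z :=
  if Nat.ltb i K then (if Nat.eqb i a then 1%Z else 0%Z)
  else if Nat.eqb i K then 1%Z
  else if Nat.ltb i (K + 1 + 2 ^ K) then (- b2z (memb K (i - (K + 1)) a))%Z
  else b2z (memb K e a).

Definition dsys (K e : nat) (xs : nat -> R) (i : nat) : R :=
  if Nat.ltb i K then 0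
  else if Nat.eqb i K then 1
  else if Nat.ltb i (K + 1 + 2 ^ K) then - xs (i - (K + 1))%nat
  else xs e.

Definition certs (K e : nat) := cert (csys K e) (pK K) K.
Definition tot (K : nat) (l : nat -> nat) : nat := sN (pK K) l.
Definition Bfun (K : nat) : nat :=
  fold_right max 0%nat (map (fun e => fold_right max 0%nat (map (tot K) (certs K e))) (seq 0 (2 ^ K))).

Lemma fold_max_ge (L : list nat) y : In y L -> (y <= fold_right max 0 L)%nat.
Proof. induction L; simpl; intros H; [contradiction|]. destruct H as [<-|H]; [lia|]. specialize (IHL H); lia. Qed.

Lemma Bfun_bound K e l : (e < 2 ^ K)%nat -> In l (certs K e) -> (tot K l <= Bfun K)%nat.
Proof. intros He Hl. unfold Bfun.
 eapply Nat.le_trans; [|apply fold_max_ge, in_map, in_seq; split; [apply Nat.le_0_l|exact He]].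
 apply fold_max_ge, in_map; auto. Qed.

Lemma tot_split K l : tot K l = (sN K l + l K + sN (2 ^ K) (fun s => l (K + 1 + s)%nat) + l (K + 1 + 2 ^ K)%nat)%nat.
Proof. unfold tot, pK. rewrite !sN_add. simpl. rewrite !Nat.add_0_r. auto. Qed.

Lemma sZ_opp n f : sZ n (fun i => (- f i)%Z) = (- sZ n f)%Z.
Proof. induction n; simpl; auto. rewrite IHn; lia. Qed.

Lemma row_csys K e l a : (a < K)%nat ->
  row (csys K e) (pK K) l a =
  (Z.of_nat (l a) + Z.of_nat (l K) - sZ (2 ^ K) (fun s => Z.of_nat (l (K + 1 + s)%nat) * b2z (memb K s a))
   + Z.of_nat (l (K + 1 + 2 ^ K)%nat) * b2z (memb K e a))%Z.
Proof. intros Ha. unfold row, pK. rewrite !sZ_add. simpl.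
 assert (E1 : sZ K (fun i => (Z.of_nat (l i) * csys K e i a)%Z) = Z.of_nat (l a)).
 { rewrite (sZ_ext _ _ (fun i => if Nat.eqb i a then Z.of_nat (l i) else 0%Z)). apply (sZ_one K a (fun i => Z.of_nat (l i))); auto.
   intros i Hi. unfold csys. rewrite (proj2 (Nat.ltb_lt i K) Hi). destruct (Nat.eqb i a); lia. }
 assert (E2 : csys K e K a = 1%Z).
 { unfold csys. rewrite Nat.ltb_irrefl, Nat.eqb_refl. auto. }
 assert (E3 : sZ (2 ^ K) (fun i => (Z.of_nat (l (K + 1 + i)%nat) * csys K e (K + 1 + i) a)%Z) =
   (- sZ (2 ^ K) (fun s => Z.of_nat (l (K + 1 + s)%nat) * b2z (memb K s a)))%Z).
 { rewrite <- sZ_opp. apply sZ_ext. intros i Hi. unfold csys.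
   replace (Nat.ltb (K + 1 + i) K) with false by (symmetry; apply Nat.ltb_ge; lia).
   replace (Nat.eqb (K + 1 + i) K) with false by (symmetry; apply Nat.eqb_neq; lia).
   replace (Nat.ltb (K + 1 + i) (K + 1 + 2 ^ K)) with true by (symmetry; apply Nat.ltb_lt; lia).
   replace (K + 1 + i - (K + 1))%nat with i by lia. lia. }
 assert (E4 : csys K e (K + 1 + 2 ^ K + 0) a = b2z (memb K e a)).
 { unfold csys.
   replace (Nat.ltb (K + 1 + 2 ^ K + 0) K) with false by (symmetry; apply Nat.ltb_ge; lia).
   replace (Nat.eqb (K + 1 + 2 ^ K + 0) K) with false by (symmetry; apply Nat.eqb_neq; lia).
   replace (Nat.ltb (K + 1 + 2 ^ K + 0) (K + 1 + 2 ^ K)) with false by (symmetry; apply Nat.ltb_ge; lia). auto. }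
 rewrite E1, E3, E4. rewrite ?Nat.add_0_r. rewrite E2. lia.
Qed.

Lemma sR_opp n f : sR n (fun i => - f i) = - sR n f.
Proof. induction n; simpl; [lra|]. rewrite IHn; lra. Qed.

Lemma csys_lt K e i a : (i < K)%nat -> csys K e i a = if Nat.eqb i a then 1%Z else 0%Z.
Proof. intros; unfold csys. rewrite (proj2 (Nat.ltb_lt _ _) H). auto. Qed.
Lemma csys_K K e a : csys K e K a = 1%Z.
Proof. unfold csys. rewrite Nat.ltb_irrefl, Nat.eqb_refl. auto. Qed.
Lemma csys_s K e s a : (s < 2 ^ K)%nat -> csys K e (K + 1 + s) a = (- b2z (memb K s a))%Z.
Proof. intros; unfold csys.
 replace (Nat.ltb (K + 1 + s) K) with false by (symmetry; apply Nat.ltb_ge; lia).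
 replace (Nat.eqb (K + 1 + s) K) with false by (symmetry; apply Nat.eqb_neq; lia).
 replace (Nat.ltb (K + 1 + s) (K + 1 + 2 ^ K)) with true by (symmetry; apply Nat.ltb_lt; lia).
 replace (K + 1 + s - (K + 1))%nat with s by lia. auto. Qed.
Lemma csys_T K e a : csys K e (K + 1 + 2 ^ K) a = b2z (memb K e a).
Proof. unfold csys.
 replace (Nat.ltb (K + 1 + 2 ^ K) K) with false by (symmetry; apply Nat.ltb_ge; lia).
 replace (Nat.eqb (K + 1 + 2 ^ K) K) with false by (symmetry; apply Nat.eqb_neq; lia).
 replace (Nat.ltb (K + 1 + 2 ^ K) (K + 1 + 2 ^ K)) with false by (symmetry; apply Nat.ltb_ge; lia). auto. Qed.
Lemma dsys_lt K e xs i : (i < K)%nat -> dsys K e xs i = 0.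
Proof. intros; unfold dsys. rewrite (proj2 (Nat.ltb_lt _ _) H). auto. Qed.
Lemma dsys_K K e xs : dsys K e xs K = 1.
Proof. unfold dsys. rewrite Nat.ltb_irrefl, Nat.eqb_refl. auto. Qed.
Lemma dsys_s K e xs s : (s < 2 ^ K)%nat -> dsys K e xs (K + 1 + s) = - xs s.
Proof. intros; unfold dsys.
 replace (Nat.ltb (K + 1 + s) K) with false by (symmetry; apply Nat.ltb_ge; lia).
 replace (Nat.eqb (K + 1 + s) K) with false by (symmetry; apply Nat.eqb_neq; lia).
 replace (Nat.ltb (K + 1 + s) (K + 1 + 2 ^ K)) with true by (symmetry; apply Nat.ltb_lt; lia).
 replace (K + 1 + s - (K + 1))%nat with s by lia. auto. Qed.
Lemma dsys_T K e xs : dsys K e xs (K + 1 + 2 ^ K) = xs e.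
Proof. unfold dsys.
 replace (Nat.ltb (K + 1 + 2 ^ K) K) with false by (symmetry; apply Nat.ltb_ge; lia).
 replace (Nat.eqb (K + 1 + 2 ^ K) K) with false by (symmetry; apply Nat.eqb_neq; lia).
 replace (Nat.ltb (K + 1 + 2 ^ K) (K + 1 + 2 ^ K)) with false by (symmetry; apply Nat.ltb_ge; lia). auto. Qed.

Lemma rhs_dsys K e xs l :
  rhs (pK K) (dsys K e xs) l =
  INR (l K) - sR (2 ^ K) (fun s => INR (l (K + 1 + s)%nat) * xs s) + INR (l (K + 1 + 2 ^ K)%nat) * xs e.
Proof. unfold rhs, pK. rewrite !sR_add. simpl.
 rewrite (sR_ext K _ (fun _ => 0)) by (intros; rewrite dsys_lt; auto; ring). rewrite sR_zero.
 rewrite (sR_ext (2 ^ K) _ (fun s => - (INR (l (K + 1 + s)%nat) * xs s))) by (intros; rewrite dsys_s; auto; ring).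
 rewrite sR_opp. rewrite ?Nat.add_0_r. rewrite dsys_K, dsys_T. ring. Qed.

Lemma fm_extract K e xs mu : (forall i, (i < pK K)%nat -> sR K (fun j => IZR (csys K e i j) * mu j) >= dsys K e xs i) ->
  (forall a, (a < K)%nat -> mu a >= 0) /\ sR K mu >= 1 /\
  (forall s, (s < 2 ^ K)%nat -> sR K (fun j => b2r (memb K s j) * mu j) <= xs s) /\
  sR K (fun j => b2r (memb K e j) * mu j) >= xs e.
Proof. intros H. unfold pK in H. split; [|split; [|split]].
 - intros a Ha. specialize (H a ltac:(lia)). rewrite dsys_lt in H by auto.
   rewrite (sR_ext K _ (fun j => if Nat.eqb j a then mu j else 0)) in H. rewrite (sR_one K a mu) in H; auto.
   intros j Hj. rewrite csys_lt by auto. destruct (Nat.eqb_spec a j), (Nat.eqb_spec j a); subst; try lia; simpl; ring.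
 - specialize (H K ltac:(lia)). rewrite dsys_K in H.
   rewrite (sR_ext K _ mu) in H; auto. intros; rewrite csys_K; simpl; ring.
 - intros s Hs. specialize (H (K + 1 + s)%nat ltac:(lia)). rewrite dsys_s in H by auto.
   rewrite (sR_ext K _ (fun j => - (b2r (memb K s j) * mu j))) in H. rewrite sR_opp in H. lra.
   intros; rewrite csys_s by auto. unfold b2z, b2r; destruct (memb K s i); simpl; ring.
 - specialize (H (K + 1 + 2 ^ K)%nat ltac:(lia)). rewrite dsys_T in H.
   rewrite (sR_ext K _ (fun j => b2r (memb K e j) * mu j)) in H; auto.
   intros; rewrite csys_T. unfold b2z, b2r; destruct (memb K e i); simpl; ring.
Qed.

Lemma lsum_map {A B} (f : B -> R) (g : A -> B) L : lsum f (map g L) = lsum (fun a => f (g a)) L.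
Proof. induction L; [reflexivity|]. cbn [map]. rewrite !lsum_cons, IHL. auto. Qed.
Lemma len_filter_map {A B} (f : B -> bool) (g : A -> B) L : length (filter f (map g L)) = length (filter (fun a => f (g a)) L).
Proof. induction L; simpl; auto. destruct (f (g a)); simpl; auto. Qed.

Lemma L1 (h cnt : nat -> nat) n : length (flat_map (fun s => repeat (h s) (cnt s)) (seq 0 n)) = sN n cnt.
Proof. induction n; auto. rewrite seq_S, flat_map_app, length_app, IHn. simpl. rewrite app_nil_r, repeat_length. auto. Qed.
Lemma L2 (g : nat -> R) (h cnt : nat -> nat) n :
  lsum g (flat_map (fun s => repeat (h s) (cnt s)) (seq 0 n)) = sR n (fun s => INR (cnt s) * g (h s)).
Proof. induction n; [reflexivity|]. rewrite seq_S, flat_map_app, lsum_app, IHn. cbn [sR]. f_equal.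
 cbn [flat_map]. rewrite app_nil_r. rewrite ?Nat.add_0_l. induction (cnt n) as [|c IH]; [cbn; ring|].
 cbn [repeat]. rewrite lsum_cons, IH. rewrite S_INR; ring. Qed.
Lemma L3 (g : nat -> bool) (h cnt : nat -> nat) n :
  length (filter g (flat_map (fun s => repeat (h s) (cnt s)) (seq 0 n))) = sN n (fun s => (cnt s * (if g (h s) then 1 else 0))%nat).
Proof. induction n; auto. rewrite seq_S, flat_map_app, filter_app, length_app, IHn. simpl. rewrite app_nil_r. f_equal.
 induction (cnt n); simpl; auto. destruct (g (h n)); simpl; lia. Qed.
Lemma L4 (g : nat -> R) L d : lsum (fun j => g (nth j L d)) (seq 0 (length L)) = lsum g L.
Proof. induction L; [reflexivity|]. cbn [length seq]. rewrite !lsum_cons, <- seq_shift, lsum_map. cbn [nth]. rewrite IHL. auto. Qed.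
Lemma L5 (g : nat -> bool) L d : length (filter (fun j => g (nth j L d)) (seq 0 (length L))) = length (filter g L).
Proof. induction L; [reflexivity|]. cbn [length seq filter nth]. rewrite <- seq_shift. destruct (g a); cbn [length]; rewrite len_filter_map; cbn [nth]; rewrite IHL; auto. Qed.

Lemma pick_J (g : nat -> bool) m k' : (k' <= length (filter g (seq 0 m)))%nat ->
  exists J, NoDup J /\ length J = k' /\ (forall j, In j J -> (j < m)%nat) /\ (forall j, In j J -> g j = true).
Proof. intros Hk. set (F := filter g (seq 0 m)).
 assert (HF : forall j, In j (firstn k' F) -> In j F).
 { intros j Hj. rewrite <- (firstn_skipn k' F). apply in_or_app; auto. }
 exists (firstn k' F). split; [|split; [|split]].
 - apply (NoDup_app_remove_r _ (skipn k' F)). rewrite firstn_skipn. apply NoDup_filter, seq_NoDup.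
 - apply firstn_length_le; auto.
 - intros j Hj. apply HF, filter_In in Hj as [Hj _]. apply in_seq in Hj; lia.
 - intros j Hj. apply HF, filter_In in Hj as [_ Hj]. auto. Qed.

Definition idxf (Lst : list nat) (ie : nat) (j : nat) : nat := if Nat.ltb j (length Lst) then nth j Lst 0%nat else ie.

Section Cert.
Variables (K : nat) (V : nat -> nat -> bool) (rho : nat -> pformula) (MN Bb : nat) (x : nat -> R) (idxOf : nat -> nat) (e : nat).
Hypothesis Hcover : forall v, exists a, (a < K)%nat /\ forall i, (1 <= i <= MN)%nat -> peval v (rho i) = peval (V a) (rho i).
Hypothesis HidxR : forall s, (1 <= idxOf s <= MN)%nat.
Hypothesis Hsup : forall s a, (a < K)%nat -> memb K s a = true -> peval (V a) (rho (idxOf s)) = true.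
Hypothesis He : forall a, (a < K)%nat -> memb K e a = peval (V a) (rho (idxOf e)).
Hypothesis HeK : (e < 2 ^ K)%nat.
Hypothesis HBb : (Bfun K <= Bb)%nat.
Hypothesis HUP : forall (m n k : nat) (idx : nat -> nat),
     (m <= Bb)%nat -> (n <= Bb)%nat -> (k <= Bb)%nat ->
     (forall j, (j <= m)%nat -> (1 <= idx j <= MN)%nat) ->
     (forall v, peval v (rho (idx m)) = true -> big_disj rho m idx (k + n) v) ->
     (forall v, big_disj rho m idx k v) ->
     sumx x m idx - INR n * x (idx m) >= INR k.

Lemma cert_ok l : In l (certs K e) -> rhs (pK K) (dsys K e (fun s => x (idxOf s))) l <= 0.
Proof. intros Hl.
 set (cnt := fun s => l (K + 1 + s)%nat).
 set (Lst := flat_map (fun s => repeat (idxOf s) (cnt s)) (seq 0 (2 ^ K))).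
 set (m := length Lst). set (idx := idxf Lst (idxOf e)).
 set (n := l (K + 1 + 2 ^ K)%nat). set (k := l K).
 assert (Htot := Bfun_bound K e l HeK Hl). rewrite tot_split in Htot.
 assert (Hm : m = sN (2 ^ K) (fun s => l (K + 1 + s)%nat)) by apply L1.
 assert (Hidx_lt : forall j, (j < m)%nat -> idx j = nth j Lst 0%nat).
 { intros j Hj. unfold idx, idxf. fold m. rewrite (proj2 (Nat.ltb_lt _ _) Hj). auto. }
 assert (Hidx_m : idx m = idxOf e).
 { unfold idx, idxf. fold m. rewrite Nat.ltb_irrefl. auto. }
 assert (Hidx : forall j, (j <= m)%nat -> (1 <= idx j <= MN)%nat).
 { intros j Hj. destruct (Nat.eq_dec j m) as [->|Hne]. rewrite Hidx_m; auto.
   rewrite Hidx_lt by lia. assert (Hin : In (nth j Lst 0%nat) Lst) by (apply nth_In; fold m; lia).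
   unfold Lst in Hin. apply in_flat_map in Hin as [s [_ Hs]]. apply repeat_spec in Hs. unfold Lst; rewrite Hs; auto. }
 assert (Hcount : forall v, exists a, (a < K)%nat /\
   (length (filter (fun j => peval v (rho (idx j))) (seq 0 m)) >= k + n * (if memb K e a then 1 else 0))%nat /\
   (peval v (rho (idx m)) = memb K e a)).
 { intros v. destruct (Hcover v) as [a [Ha Hag]]. exists a. split; auto. split.
   - rewrite (filter_ext_in _ (fun j => peval v (rho (nth j Lst 0%nat))) (seq 0 m)).
     2:{ intros j Hj. apply in_seq in Hj. rewrite Hidx_lt by lia. auto. }
     unfold m. rewrite (L5 (fun i => peval v (rho i))). unfold Lst. rewrite L3.
     assert (Hz := cert_zero (csys K e) (pK K) K l a Hl Ha).
     rewrite row_csys in Hz by auto.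
     assert (Hs : sZ (2 ^ K) (fun s => (Z.of_nat (l (K + 1 + s)%nat) * b2z (memb K s a))%Z) =
                  Z.of_nat (sN (2 ^ K) (fun s => (cnt s * (if memb K s a then 1 else 0))%nat))).
     { rewrite Z_sN. apply sZ_ext. intros s _. unfold cnt, b2z. destruct (memb K s a); lia. }
     rewrite Hs in Hz.
     assert (Hle : (sN (2 ^ K) (fun s => (cnt s * (if memb K s a then 1 else 0))%nat) <=
                    sN (2 ^ K) (fun s => (cnt s * (if peval v (rho (idxOf s)) then 1 else 0))%nat))%nat).
     { apply sN_le. intros s _. destruct (memb K s a) eqn:Hms; [|lia].
       rewrite Hag by auto. rewrite (Hsup s a Ha Hms). lia. }
     unfold b2z in Hz. fold k n in Hz. cbv beta. destruct (memb K e a); lia.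
   - rewrite Hidx_m, Hag by auto. rewrite He; auto. }
 assert (HUP' := HUP m n k idx ltac:(lia) ltac:(lia) ltac:(lia) Hidx).
 assert (Hsum : sumx x m idx = sR (2 ^ K) (fun s => INR (cnt s) * x (idxOf s))).
 { unfold sumx. change (lsum (fun j => x (idx j)) (seq 0 m) = sR (2 ^ K) (fun s => INR (cnt s) * x (idxOf s))).
   rewrite (lsum_ext _ (fun j => x (nth j Lst 0%nat))). unfold m. rewrite L4. unfold Lst. apply L2.
   intros j Hj. apply in_seq in Hj. rewrite Hidx_lt by lia. auto. }
 assert (HH : sumx x m idx - INR n * x (idx m) >= INR k).
 { apply HUP'.
   - intros v Hv. destruct (Hcount v) as [a [Ha [Hc Hme]]]. rewrite Hv in Hme. rewrite <- Hme in Hc.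
     unfold big_disj. apply pick_J. lia.
   - intros v. destruct (Hcount v) as [a [Ha [Hc Hme]]]. unfold big_disj. apply pick_J. lia. }
 rewrite rhs_dsys. rewrite Hsum, Hidx_m in HH. fold k n. unfold cnt in HH. lra.
Qed.
End Cert.


Lemma pvars_len phi : (length (pvars phi) <= psize phi)%nat.
Proof. induction phi; simpl; try rewrite length_app; lia. Qed.

Lemma lprops_len f : (length (lprops f) <= lsize f)%nat.
Proof. induction f; cbn [lprops lsize]; try rewrite length_app; try lia.
 unfold term_size. assert (H : forall L : list (R * pformula), (length (flat_map (fun s => pvars (snd s)) L) <=
   fold_right (fun s n => (summand_size s + n)%nat) 0%nat L)%nat).
 { induction L; [cbn; lia|]. cbn [flat_map fold_right]. rewrite length_app. assert (summand_size a = 4 + psize (snd a))%nat by reflexivity. assert (Hp := pvars_len (snd a)). lia. }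
 specialize (H (term_summands t)). lia. Qed.

Lemma props_len f : (length (props_of f) <= lsize f)%nat.
Proof. eapply Nat.le_trans; [|apply lprops_len]. unfold props_of.
 apply NoDup_incl_length. apply NoDup_nodup. intros q Hq. apply nodup_In in Hq; auto. Qed.

Section Compl.
Variables (l0 : literal) (ls : list literal) (rho : nat -> pformula) (ix : pformula -> nat) (x : nat -> R).
Let f := conj_lits l0 ls.
Let ps := props_of f.
Let N := length ps.
Let K := (2 ^ N)%nat.
Let MN := (2 ^ K)%nat.
Hypothesis Hrho : rho_listing ps MN rho.
Hypothesis Hix : index_map rho MN ix l0 ls.
Hypothesis Hx : solves_hat rho ix MN (Bfun K) l0 ls x.

Definition V (a : nat) : nat -> bool := nth a (allv ps) (fun _ => false).
Definition maskOf (i : nat) : list bool := map (fun u => peval u (rho i)) (allv ps).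
Definition idxOf (s : nat) : nat :=
  match find (fun i => if list_eq_dec bool_dec (maskOf i) (nth s (allbl K) []) then true else false) (seq 1 MN) with
  | Some i => i | None => MN end.

Lemma K_len : length (allv ps) = K.
Proof. unfold K, N. apply allv_length. Qed.
Lemma K_pos : (0 < K)%nat.
Proof. unfold K. assert (H := Nat.pow_nonzero 2 N ltac:(lia)). lia. Qed.
Lemma MN_pos : (1 <= MN)%nat.
Proof. unfold MN. assert (H := Nat.pow_nonzero 2 K ltac:(lia)). lia. Qed.

Lemma Hvars i : (1 <= i <= MN)%nat -> forall q, In q (pvars (rho i)) -> In q ps.
Proof. destruct Hrho as [H _]. apply H. Qed.

Lemma Fcover : forall v, exists a, (a < K)%nat /\ forall i, (1 <= i <= MN)%nat -> peval v (rho i) = peval (V a) (rho i).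
Proof. intros v. destruct (allv_cover ps v) as [u [Hu Hag]].
 destruct (In_nth _ _ (fun _ => false) Hu) as [a [Ha Hn]]. exists a. rewrite K_len in Ha. split; auto.
 intros i Hi. unfold V. rewrite Hn. apply peval_agree. intros q Hq. apply Hag. apply (Hvars i); auto. Qed.

Lemma Fmask a i : (a < K)%nat -> nth a (maskOf i) false = peval (V a) (rho i).
Proof. intros Ha. unfold maskOf, V.
 rewrite (nth_indep _ false (peval (fun _ => false) (rho i))) by (rewrite length_map, K_len; auto).
 apply (map_nth (fun u => peval u (rho i))). Qed.

Lemma Fequiv i j : (1 <= i <= MN)%nat -> (1 <= j <= MN)%nat -> maskOf i = maskOf j -> pequiv (rho i) (rho j).
Proof. intros Hi Hj Hm v. destruct Fcover with v as [a [Ha Hag]]. rewrite !Hag by auto.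
 rewrite <- !Fmask by auto. rewrite Hm. auto. Qed.

Lemma Fpos i : exists s, (s < 2 ^ K)%nat /\ nth s (allbl K) [] = maskOf i.
Proof. assert (Hin : In (maskOf i) (allbl K)) by (apply allbl_in; unfold maskOf; rewrite length_map, K_len; auto).
 destruct (In_nth _ _ [] Hin) as [s [Hs Hn]]. exists s. rewrite allbl_length in Hs. auto. Qed.

Lemma FidxR s : (1 <= idxOf s <= MN)%nat.
Proof. unfold idxOf. destruct (find _ _) eqn:E.
 - apply find_some in E as [E _]. apply in_seq in E. lia.
 - assert (H := MN_pos). lia. Qed.

Lemma Fsup s a : (a < K)%nat -> memb K s a = true -> peval (V a) (rho (idxOf s)) = true.
Proof. intros Ha Hm. unfold idxOf. destruct (find _ _) eqn:E.
 - apply find_some in E as [_ E]. destruct (list_eq_dec bool_dec (maskOf n) (nth s (allbl K) [])) as [Eq|]; [|discriminate].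
   rewrite <- Fmask by auto. rewrite Eq. apply Hm.
 - destruct Hrho as [_ [_ [_ [_ HT]]]]. rewrite (HT (V a)). auto. Qed.

Lemma Fidx_pos s i : (1 <= i <= MN)%nat -> nth s (allbl K) [] = maskOf i -> idxOf s = i.
Proof. intros Hi Hs. unfold idxOf. destruct (find _ _) eqn:E.
 - apply find_some in E as [Hin E]. apply in_seq in Hin.
   destruct (list_eq_dec bool_dec (maskOf n) (nth s (allbl K) [])) as [Eq|]; [|discriminate].
   destruct Hrho as [_ [Hinj _]]. apply Hinj; try lia. apply Fequiv; try lia. congruence.
 - exfalso. assert (H := find_none _ _ E i ltac:(apply in_seq; lia)). simpl in H.
   destruct (list_eq_dec bool_dec (maskOf i) (nth s (allbl K) [])); [discriminate|congruence]. Qed.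

Lemma Ffeas i : (1 <= i <= MN)%nat -> exists e mu, (e < 2 ^ K)%nat /\ nth e (allbl K) [] = maskOf i /\
  (forall a, (a < K)%nat -> mu a >= 0) /\ sR K mu >= 1 /\
  (forall s, (s < 2 ^ K)%nat -> sR K (fun j => b2r (memb K s j) * mu j) <= x (idxOf s)) /\
  sR K (fun j => b2r (memb K e j) * mu j) >= x (idxOf e).
Proof. intros Hi. destruct (Fpos i) as [e [He Hne]]. exists e.
 destruct (FM_farkas (csys K e) (pK K) K (dsys K e (fun s => x (idxOf s)))) as [mu Hmu].
 - intros l Hl. apply (cert_ok K V rho MN (Bfun K) x idxOf e); auto.
   + apply Fcover.
   + apply FidxR.
   + apply Fsup.
   + intros a Ha. unfold memb. rewrite Hne, Fmask by auto. rewrite (Fidx_pos e i); auto.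
   + destruct Hx as [_ [_ [_ [_ H]]]]. apply H.
 - exists mu. split; auto. split; auto. apply (fm_extract K e (fun s => x (idxOf s)) mu); auto. Qed.

Definition W := {a : nat | (a < K)%nat}.
Definition piW (w : W) : nat -> bool := V (proj1_sig w).
Definition ind (X : W -> Prop) (a : nat) : R :=
  if excluded_middle_informative (exists H : (a < K)%nat, X (exist _ a H)) then 1 else 0.
Definition meas (mu : nat -> R) (X : W -> Prop) : R := sR K (fun a => ind X a * mu a).
Definition feasible (mu : nat -> R) : Prop :=
  (forall a, (a < K)%nat -> mu a >= 0) /\ sR K mu = 1 /\
  (forall s, (s < 2 ^ K)%nat -> sR K (fun j => b2r (memb K s j) * mu j) <= x (idxOf s)).
Definition Pset (m : (W -> Prop) -> R) : Prop := exists mu, feasible mu /\ m = meas mu.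

Lemma feas_of i : (1 <= i <= MN)%nat -> exists e mu, (e < 2 ^ K)%nat /\ nth e (allbl K) [] = maskOf i /\
  feasible mu /\ sR K (fun j => b2r (memb K e j) * mu j) >= x i.
Proof. intros Hi. destruct (Ffeas i Hi) as [e [mu [He [Hne [H1 [H2 [H3 H4]]]]]]].
 exists e, mu. split; auto. split; auto. rewrite (Fidx_pos e i) in H4 by auto. split; auto.
 split; auto. split; auto.
 destruct (Fpos MN) as [t [Ht Htn]]. specialize (H3 t Ht). rewrite (Fidx_pos t MN) in H3 by (auto; assert (H := MN_pos); lia).
 destruct Hx as [_ [_ [HMN _]]]. rewrite HMN in H3.
 rewrite (sR_ext K _ mu) in H3. lra.
 intros a Ha. unfold memb. rewrite Htn, Fmask by auto. destruct Hrho as [_ [_ [_ [_ HT]]]]. rewrite (HT (V a)). simpl. ring.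
Qed.

Lemma ind_T a : (a < K)%nat -> ind (fun _ => True) a = 1.
Proof. intros Ha. unfold ind. destruct (excluded_middle_informative _) as [_|n]; auto. exfalso; apply n; exists Ha; auto. Qed.

Lemma meas_fa mu : feasible mu -> is_fa_prob (fun _ : W -> Prop => True) (meas mu).
Proof. intros [H1 [H2 H3]]. split; [|split].
 - unfold meas. rewrite (sR_ext K _ mu); auto. intros a Ha. rewrite ind_T; auto; ring.
 - intros X _. unfold meas. rewrite <- (sR_zero K). apply sR_le. intros a Ha. specialize (H1 a Ha).
   unfold ind. destruct (excluded_middle_informative _); lra.
 - intros X Y _ _ Hd. unfold meas. rewrite <- sR_plus. apply sR_ext. intros a Ha. unfold ind.
   destruct (excluded_middle_informative (exists H : (a < K)%nat, X (exist _ a H) \/ Y (exist _ a H))) as [[H [HX|HY]]|Hn];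
   destruct (excluded_middle_informative (exists H : (a < K)%nat, X (exist _ a H))) as [[H' HX']|HnX];
   destruct (excluded_middle_informative (exists H : (a < K)%nat, Y (exist _ a H))) as [[H'' HY']|HnY]; try ring.
   + exfalso. rewrite (le_unique _ _ H H'') in HX. rewrite (le_unique _ _ H' H'') in HX'. eapply Hd; eauto.
   + exfalso; apply HnX; eauto.
   + exfalso. rewrite (le_unique _ _ H H') in HY. eapply Hd; eauto.
   + exfalso; apply HnY; eauto.
   + exfalso; apply Hn; eauto.
   + exfalso; apply Hn; eauto.
   + exfalso; apply Hn; eauto.
Qed.

Lemma alg_T : is_algebra (fun _ : W -> Prop => True).
Proof. split; [|split]; auto. Qed.

Lemma Pset_ne : exists m, Pset m.
Proof. destruct (feas_of 1%nat ltac:(assert (H := MN_pos); lia)) as [e [mu [_ [_ [Hf _]]]]].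
 exists (meas mu). exists mu; auto. Qed.

Lemma Pset_meas m : Pset m -> is_fa_prob (fun _ : W -> Prop => True) m.
Proof. intros [mu [Hf ->]]. apply meas_fa; auto. Qed.

Definition Mod : ups := mkUPS W (fun _ => True) Pset piW alg_T Pset_meas Pset_ne (fun _ => I).

Lemma meas_rho mu j e : (1 <= j <= MN)%nat -> nth e (allbl K) [] = maskOf j ->
  meas mu (psem Mod (rho j)) = sR K (fun a => b2r (memb K e a) * mu a).
Proof. intros Hj He. unfold meas. apply sR_ext. intros a Ha. f_equal.
 unfold memb. rewrite He, Fmask by auto. unfold ind, psem. simpl. unfold piW. simpl.
 destruct (excluded_middle_informative _) as [[H E]|Hn]; simpl in *.
 - rewrite E; auto.
 - destruct (peval (V a) (rho j)) eqn:E; auto. exfalso; apply Hn. exists Ha; auto. Qed.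

Lemma upper_rho j : (1 <= j <= MN)%nat -> upper Mod (psem Mod (rho j)) = x j.
Proof. intros Hj. destruct (upper_spec Mod (psem Mod (rho j)) I) as [Ha Hb].
 destruct (feas_of j Hj) as [e [mu [He [Hne [Hf Hge]]]]].
 apply Rle_antisym.
 - apply Hb. intros m [mu' [Hf' ->]]. rewrite (meas_rho mu' j e Hj Hne).
   destruct Hf' as [_ [_ H3]]. replace (x j) with (x (idxOf e)) by (rewrite (Fidx_pos e j); auto). apply H3; auto.
 - eapply Rle_trans; [|apply (Ha (meas mu)); exists mu; auto]. rewrite (meas_rho mu j e Hj Hne). lra.
Qed.

Lemma compl_lsat : lsat Mod f.
Proof. apply (proj2 (lsat_conj Mod l0 ls)). intros l Hl.
 assert (Hu : forall phi, In phi (lit_forms l) -> upper Mod (psem Mod phi) = x (ix phi)).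
 { intros phi Hphi. destruct (Hix l phi Hl Hphi) as [Hr He].
   rewrite <- (psem_equiv Mod _ _ He). apply upper_rho; auto. }
 apply (proj2 (lsat_lit Mod ix x l Hu)).
 destruct Hx as [Hb _]. apply Hb; auto.
Qed.

Lemma compl_worlds : at_most_worlds Mod (2 ^ lsize f).
Proof. assert (HK := K_pos).
 exists (map (fun a => exist (fun a => (a < K)%nat) (a mod K)%nat (Nat.mod_upper_bound a K ltac:(lia))) (seq 0 K)).
 split.
 - intros [a H]. apply in_map_iff. exists a. split; [|apply in_seq; lia].
   match goal with |- exist _ _ ?P = _ => generalize P end. rewrite Nat.mod_small by auto. intros H'.
   f_equal. apply le_unique.
 - rewrite length_map, length_seq. unfold K. apply Nat.pow_le_mono_r; [lia|]. apply props_len.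
Qed.
End Compl.


Theorem proposition3 :
  exists B : nat -> nat,
  forall (l0 : literal) (ls : list literal)
         (rho : nat -> pformula) (ix : pformula -> nat),
    let f := conj_lits l0 ls in
    let N := length (props_of f) in
    let MN := (2 ^ (2 ^ N))%nat in
    rho_listing (props_of f) MN rho ->
    index_map rho MN ix l0 ls ->
    (satisfiable f <->
       exists x : nat -> R, solves_hat rho ix MN (B (2 ^ N)%nat) l0 ls x) /\
    ((exists x : nat -> R, solves_hat rho ix MN (B (2 ^ N)%nat) l0 ls x) ->
       exists M : ups, at_most_worlds M (2 ^ lsize f) /\ lsat M f).
Proof.
  exists Bfun. intros l0 ls rho ix f N MN Hrho Hix.
  assert (Hc : (exists x : nat -> R, solves_hat rho ix MN (Bfun (2 ^ N)%nat) l0 ls x) ->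
       exists M : ups, at_most_worlds M (2 ^ lsize f) /\ lsat M f).
  { intros [x Hx]. exists (Mod l0 ls rho ix x Hrho Hx). split. apply compl_worlds. apply (compl_lsat l0 ls rho ix x Hrho Hix Hx). }
  split; auto. split.
  - apply (soundness (Bfun (2 ^ N)%nat) l0 ls rho ix Hrho Hix).
  - intros H. destruct (Hc H) as [M [_ HM]]. exists M; auto.
Qed.
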